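(* Let $F=\breve F(\alpha_1,\dots,\alpha_t)$ be a fence with shared elements $s_1,\dots,s_{t-1}$. Then $Y=\{\hat\chi_{s_i}: i\in[t-1]\}$ is linearly independent and $\operatorname{Span}_{\mathbb R}(Y)\cap I_T(F)=\{0\}$.
   Context: Fences: let $\alpha=(\alpha_1,\dots,\alpha_t)$ be positive integers with $t\ge2$ and $\alpha_1,\alpha_t\ge2$. Put $a_0=0$, $a_i=\alpha_1+\dots+\alpha_i$, $n=a_t-1$. The fence $\breve F(\alpha)$ is the poset on $\{x_1,\dots,x_n\}$ whose cover relations are: for $1\le j\le n-1$ with $a_{i-1}\le j<a_i$, $x_j\lessdot x_{j+1}$ if $i$ is odd and $x_j\gtrdot x_{j+1}$ if $i$ is even. Shared elements are $s_i=x_{a_i}$, $i\in[t-1]$. $\mathcal J(F)$ is the set of order ideals. For $q\in F$, $I\in\mathcal J(F)$: $\hat\chi_q(I)=1$ if $q\in I$, else $0$; $T_q(I)=1$ if $q\in\min(F\setminus I)$, $-1$ if $q\in\max(I)$, $0$ otherwise. $f\equiv\text{const}$ means $f=c+\sum_{q\in F}c_qT_q$ for real constants $c,c_q$. The order ideal toggleability space is $I_T(F)=\{f\in\operatorname{Span}_{\mathbb R}\{\hat\chi_q:q\in F\}: f\equiv\text{const}\}$. *)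

(* Defs.v *)
From HB Require Import structures.
From mathcomp Require Import all_boot all_order all_algebra.
From mathcomp Require Import reals.
Unset Printing Implicit Defensive.
Import Order.TTheory GRing.Theory Num.Theory.
Local Open Scope ring_scope.

(* A composition alpha = (alpha_1,...,alpha_t) is a seq nat of size t.
   a_i = alpha_1 + ... + alpha_i (a_0 = 0).  n = a_t - 1.
   Element x_j (1 <= j <= n) is the ordinal j-1 : 'I_n. *)
Definition fa (alpha : seq nat) (i : nat) : nat := sumn (take i alpha).
Definition fn (alpha : seq nat) : nat := (sumn alpha).-1.

(* For 1 <= j <= n-1 with a_{i-1} <= j < a_i (i in [t]):
   x_j ⋖ x_{j+1} if i odd,  x_j ⋗ x_{j+1} if i even.
   Below the block index i is written (k+1) with k : 'I_t, so i odd <-> k even. *)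
Definition cov (alpha : seq nat) : rel 'I_(fn alpha) := fun x y =>
  (* x = x_j, y = x_{j+1}, j = val x + 1, block i odd *)
  [exists k : 'I_(size alpha),
     [&& (fa alpha k <= (val x).+1)%N, ((val x).+1 < fa alpha k.+1)%N,
         val y == (val x).+1 & ~~ odd k]]
  ||
  (* y = x_j, x = x_{j+1}, j = val y + 1, block i even *)
  [exists k : 'I_(size alpha),
     [&& (fa alpha k <= (val y).+1)%N, ((val y).+1 < fa alpha k.+1)%N,
         val x == (val y).+1 & odd k]].

Definition fle (alpha : seq nat) : rel 'I_(fn alpha) := connect (cov alpha).

Definition is_ideal (alpha : seq nat) (I : {set 'I_(fn alpha)}) : bool :=
  [forall x, forall y, (fle alpha x y && (y \in I)) ==> (x \in I)].

Definition JF (alpha : seq nat) := {I : {set 'I_(fn alpha)} | is_ideal alpha I}.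

Definition chi (R : numDomainType) (alpha : seq nat) (q : 'I_(fn alpha))
  (I : JF alpha) : R := if q \in val I then 1 else 0.

Definition in_min_compl (alpha : seq nat) (I : {set 'I_(fn alpha)}) q : bool :=
  (q \notin I) && [forall p, (fle alpha p q && (p != q)) ==> (p \in I)].

Definition in_max (alpha : seq nat) (I : {set 'I_(fn alpha)}) q : bool :=
  (q \in I) && [forall p, (fle alpha q p && (p != q)) ==> (p \notin I)].

Definition togT (R : numDomainType) (alpha : seq nat) (q : 'I_(fn alpha))
  (I : JF alpha) : R :=
  if in_min_compl alpha (val I) q then 1
  else if in_max alpha (val I) q then -1 else 0.

Definition toggconst (R : numDomainType) (alpha : seq nat) (f : JF alpha -> R) : Prop :=
  exists (c : R) (cq : 'I_(fn alpha) -> R),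
    forall I, f I = c + \sum_(q : 'I_(fn alpha)) cq q * togT R alpha q I.

Definition in_span_chi (R : numDomainType) (alpha : seq nat) (f : JF alpha -> R) : Prop :=
  exists d : 'I_(fn alpha) -> R,
    forall I, f I = \sum_(q : 'I_(fn alpha)) d q * chi R alpha q I.

Definition in_IT (R : numDomainType) (alpha : seq nat) (f : JF alpha -> R) : Prop :=
  in_span_chi R alpha f /\ toggconst R alpha f.

(* hat chi_{s_i} for the shared element s_i = x_{a_i}, i.e. the element of
   'I_n with value a_i - 1 (for i in [t-1] this is < n since alpha_t >= 2). *)
Definition chi_shared (R : numDomainType) (alpha : seq nat) (i : nat)
  (I : JF alpha) : R :=
  if [exists q in val I, val q == (fa alpha i).-1] then 1 else 0.

(* Main.v *)
Require Import Defs.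
From HB Require Import structures.
From mathcomp Require Import all_boot all_order all_algebra.
From mathcomp Require Import reals.
From mathcomp Require Import zify ring lra.
Import Order.TTheory GRing.Theory Num.Theory.
Local Open Scope ring_scope.

Section Fence.
Variable alpha : seq nat.
Local Notation n := (fn alpha).
Local Notation T := 'I_(fn alpha).

Definition covn (i j : nat) : bool :=
  [exists k : 'I_(size alpha),
     [&& (fa alpha k <= i.+1)%N, (i.+1 < fa alpha k.+1)%N,
         j == i.+1 & ~~ odd k]]
  ||
  [exists k : 'I_(size alpha),
     [&& (fa alpha k <= j.+1)%N, (j.+1 < fa alpha k.+1)%N,
         i == j.+1 & odd k]].

Lemma covE (x y : T) : cov alpha x y = covn x y.
Proof. by []. Qed.

Lemma covn_adj i j : covn i j -> j = i.+1 \/ i = j.+1.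
Proof.
by case/orP=> /existsP[k /and4P[_ _ /eqP-> _]]; [left|right].
Qed.
Arguments covn_adj {i j}.

Lemma fa_mono i j : (i <= j)%N -> (fa alpha i <= fa alpha j)%N.
Proof.
rewrite /fa => le_ij; rewrite -(subnKC le_ij) takeD sumn_cat.
exact: leq_addr.
Qed.

Lemma covn_anti i : covn i i.+1 -> covn i.+1 i -> False.
Proof.
case/orP=> /existsP[k1 /and4P[h1 h2 e1 o1]]; last first.
  by move/eqP: e1; lia.
case/orP=> /existsP[k2 /and4P[g1 g2 e2 o2]].
  by move/eqP: e2; lia.
have : val k1 = val k2.
  apply/eqP; rewrite eqn_leq; apply/andP; split; rewrite leqNgt; apply/negP=> lt.
    by have := leq_trans (@fa_mono _ _ lt) h1; rewrite leqNgt g2.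
  by have := leq_trans (@fa_mono _ _ lt) g1; rewrite leqNgt h2.
by move=> E; move: o1; rewrite E o2.
Qed.

Definition fle' := fle alpha.

Lemma fle_closed (P : pred T) :
  (forall y z, cov alpha y z -> P y -> P z) ->
  forall x y, fle alpha x y -> P x -> P y.
Proof.
move=> H x y /connectP[p Hp ->]; elim: p x Hp => //= z p IH x /andP[c pz] Px.
exact: (IH z pz (H _ _ c Px)).
Qed.

Lemma cross_r (x y : T) m : fle alpha x y -> (x <= m)%N -> (m < y)%N -> covn m m.+1.
Proof.
move=> fxy xm my; apply/negPn/negP => Hc.
suff: (y <= m)%N by rewrite leqNgt my.
apply: (@fle_closed (fun z : T => (z <= m)%N) _ x y fxy xm) => u v c um; have [E|E] := @covn_adj u v c.
  rewrite E ltn_neqAle um andbT; apply/eqP => Eu; move/negP: Hc; apply.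
  by rewrite -Eu -E.
by move: um; rewrite E; lia.
Qed.

Lemma cross_l (x y : T) m : fle alpha x y -> (y <= m)%N -> (m < x)%N -> covn m.+1 m.
Proof.
move=> fxy ym mx; apply/negPn/negP => Hc.
suff: (m < y)%N by rewrite ltnNge ym.
apply: (@fle_closed (fun z : T => (m < z)%N) _ x y fxy mx) => u v c um; have [E|E] := @covn_adj u v c.
  by rewrite E; lia.
rewrite ltn_neqAle; apply/andP; split; last by move: um; rewrite E; lia.
apply/eqP => Eu; move/negP: Hc; apply; by rewrite Eu -E.
Qed.

Lemma no_back (x y : T) : cov alpha x y -> fle alpha y x -> False.
Proof.
move=> c f; have := c; rewrite covE => c'; have [E|E] := covn_adj c'.
  have := @cross_l y x (val x) f (leqnn _); rewrite E ltnSn => /(_ isT) c2.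
  by rewrite E in c'; exact: covn_anti c' c2.
have := @cross_r y x (val y) f (leqnn _); rewrite E ltnSn => /(_ isT) c2.
by rewrite E in c'; exact: covn_anti c2 c'.
Qed.

Lemma cov_neq (x y : T) : cov alpha x y -> x != y.
Proof.
rewrite covE => /covn_adj[] E; apply/eqP => xy; move: E; rewrite xy; lia.
Qed.

Lemma idealP (I : {set T}) :
  reflect (forall x y, cov alpha x y -> y \in I -> x \in I) (is_ideal alpha I).
Proof.
apply: (iffP forallP) => H.
  move=> x y c yI; have /forallP/(_ y) := H x.
  by rewrite /fle connect1 //= yI.
move=> x; apply/forallP => y; apply/implyP => /andP[f yI].
apply/negPn/negP => xI.
suff: y \notin I by rewrite yI.
apply: (@fle_closed (fun z => z \notin I) _ x y f xI) => u v c uI; apply/negP => vI; move/negP: uI; apply; exact: H c vI.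
Qed.


Lemma ideal_fle (I : {set T}) x y : is_ideal alpha I -> fle alpha x y -> y \in I -> x \in I.
Proof. by move=> /forallP/(_ x)/forallP/(_ y)/implyP H f yI; apply: H; rewrite f yI. Qed.
Arguments ideal_fle {I x y}.

Lemma in_minE (I : {set T}) q : is_ideal alpha I ->
  in_min_compl alpha I q = (q \notin I) && [forall r, cov alpha r q ==> (r \in I)].
Proof.
move=> HI; rewrite /in_min_compl; case: (q \in I) => //=.
apply/forallP/forallP => H r; apply/implyP => Hr.
  have /implyP := H r; apply; by rewrite /fle connect1 //= cov_neq.
move/andP: Hr => [/connectP[s Hs Hl] rq].
case/lastP: s Hs Hl => [|s z] /=; first by move=> _ E; rewrite E eqxx in rq.
rewrite rcons_path last_rcons => /andP[Hs c] Hl; subst z.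
have /implyP H' := H (last r s); have lI := H' c.
apply: (ideal_fle HI _ lI); apply/connectP; by exists s.
Qed.

Lemma in_maxE (I : {set T}) q : is_ideal alpha I ->
  in_max alpha I q = (q \in I) && [forall r, cov alpha q r ==> (r \notin I)].
Proof.
move=> HI; rewrite /in_max; case: (q \in I) => //=.
apply/forallP/forallP => H r; apply/implyP => Hr.
  have /implyP := H r; apply; by rewrite /fle connect1 //= eq_sym cov_neq.
move/andP: Hr => [/connectP[s Hs Hl] rq].
case: s Hs Hl => [|z s] /=; first by move=> _ E; rewrite E eqxx in rq.
move=> /andP[c Hs] Hl.
have /implyP H' := H z; have zI := H' c.
apply/negP => rI; move/negP: zI; apply; apply: (ideal_fle HI _ rI).
apply/connectP; by exists s.
Qed.

End Fence.

Section Tog.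
Variable R : numDomainType.
Variable alpha : seq nat.
Local Notation T := 'I_(fn alpha).
Local Notation cov := (cov alpha).

Definition addable (I : {set T}) q := (q \notin I) && [forall r, cov r q ==> (r \in I)].
Definition removable (I : {set T}) q := (q \in I) && [forall r, cov q r ==> (r \notin I)].
Definition togS (I : {set T}) q : R :=
  if addable I q then 1 else if removable I q then -1 else 0.

Lemma togTE (I : JF alpha) q : togT R alpha q I = togS (val I) q.
Proof. by rewrite /togT in_minE ?in_maxE //; exact: (valP I). Qed.

Lemma ideal_add (I : {set T}) p : is_ideal alpha I -> addable I p -> is_ideal alpha (p |: I).
Proof.
move=> /idealP HI /andP[_ /forallP Hp]; apply/idealP => x y c.
rewrite !in_setU1 => /orP[/eqP E|yI]; last by rewrite (HI _ _ c yI) orbT.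
by subst y; have /implyP -> := Hp x; rewrite ?orbT.
Qed.

Lemma G1 I p : addable I p -> togS I p = 1.
Proof. by rewrite /togS => ->. Qed.

Lemma G2 I p : is_ideal alpha I -> addable I p -> togS (p |: I) p = -1.
Proof.
move=> /idealP HI /andP[pI _]; rewrite /togS /addable /removable setU11 /=.
suff -> : [forall r, cov p r ==> (r \notin p |: I)] by [].
apply/forallP => r; apply/implyP => c; rewrite in_setU1 negb_or eq_sym cov_neq //=.
by apply/negP => rI; move/negP: pI; apply; exact: HI c rI.
Qed.

Lemma G3 I p x : x != p -> ~~ cov p x -> ~~ cov x p -> togS (p |: I) x = togS I x.
Proof.
move=> xp c1 c2; rewrite /togS /addable /removable in_setU1 (negbTE xp) /=.
have -> : [forall r, cov r x ==> (r \in p |: I)] = [forall r, cov r x ==> (r \in I)].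
  apply: eq_forallb => r; rewrite in_setU1; case: (eqVneq r p) => // ->.
  by rewrite (negbTE c1).
have -> : [forall r, cov x r ==> (r \notin p |: I)] = [forall r, cov x r ==> (r \notin I)].
  apply: eq_forallb => r; rewrite in_setU1; case: (eqVneq r p) => // ->.
  by rewrite (negbTE c2).
by [].
Qed.

Lemma G4 I p x : is_ideal alpha I -> addable I p -> cov p x -> togS I x = 0.
Proof.
move=> /idealP HI /andP[pI _] c; rewrite /togS /addable /removable.
have xI : x \notin I by apply/negP => xI; move/negP: pI; apply; exact: HI c xI.
suff -> : [forall r, cov r x ==> (r \in I)] = false by rewrite andbF (negbTE xI).
by apply/negP => /forallP/(_ p)/implyP/(_ c); rewrite (negbTE pI).
Qed.

Lemma G5 I p x : addable I p -> cov x p -> togS (p |: I) x = 0.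
Proof.
move=> /andP[_ /forallP Hp] c; have /implyP/(_ c) xI := Hp x.
rewrite /togS /addable /removable in_setU1 xI orbT /=.
suff -> : [forall r, cov x r ==> (r \notin p |: I)] = false by [].
by apply/negP => /forallP/(_ p)/implyP/(_ c); rewrite setU11.
Qed.

Arguments G1 {I p}.
Arguments G2 {I p}.
Arguments G3 {I p x}.
Arguments G4 {I p x}.
Arguments G5 {I p x}.
Arguments ideal_add {I p}.

Lemma G6 I p x : is_ideal alpha I -> addable I p -> x != p ->
  (cov p x || cov x p) ->
  0 <= togS (p |: I) x - togS I x <= 1.
Proof.
move=> HI Ha xp /orP[c|c].
  rewrite (G4 HI Ha c) subr0 /togS.
  have xI : x \notin p |: I.
    rewrite in_setU1 (negbTE xp) /=; apply/negP => xI.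
    move: Ha => /andP[/negP pI _]; apply: pI.
    by move/idealP: HI => HI; exact: HI p x c xI.
  rewrite /removable (negbTE xI) andFb.
  by case: (addable _ _); rewrite ?lexx ?ler01.
rewrite (G5 Ha c) sub0r /togS.
have xI : x \in I by move: Ha => /andP[_ /forallP/(_ x)/implyP/(_ c)].
rewrite /addable xI /=.
by case: (removable _ _); rewrite ?opprK ?oppr0 ?lexx ?ler01.
Qed.

End Tog.
Arguments ideal_add {alpha I p}.
Arguments G1 {R alpha I p}.
Arguments G2 {R alpha I p}.
Arguments G3 {R alpha I p x}.
Arguments G4 {R alpha I p x}.
Arguments G5 {R alpha I p x}.
Arguments G6 {R alpha I p x}.
Arguments no_back {alpha x y}.
Arguments cov_neq {alpha x y}.
Arguments cross_l {alpha x y m}.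
Arguments cross_r {alpha x y m}.
Arguments covn_adj {alpha i j}.
Arguments covn_anti {alpha i}.

Lemma fa_succ (s : seq nat) k : (k < size s)%N -> fa s k.+1 = (fa s k + nth 0 s k)%N.
Proof.
rewrite /fa; elim: s k => [|a s IH] [|k] //= H; first by rewrite take0 addn0.
by rewrite IH // addnA.
Qed.

Section Shared.
Variable alpha : seq nat.
Hypothesis Ht : (2 <= size alpha)%N.
Hypothesis Hpos : all (fun k => 0 < k)%N alpha.
Hypothesis Hfirst : (2 <= head 0 alpha)%N.
Hypothesis Hlast : (2 <= last 0 alpha)%N.
Local Notation t := (size alpha).

Lemma fa_lt_succ i : (i < t)%N -> (fa alpha i < fa alpha i.+1)%N.
Proof.
move=> it; rewrite fa_succ //; have /= := (all_nthP 0%N Hpos) i it; lia.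
Qed.

Lemma fa_strict i j : (i < j)%N -> (j <= t)%N -> (fa alpha i < fa alpha j)%N.
Proof.
move=> ij jt; have := @fa_lt_succ i ltac:(lia).
have := @fa_mono alpha i.+1 j ij; lia.
Qed.

Lemma fa1 : fa alpha 1 = head 0%N alpha.
Proof. rewrite fa_succ; last lia. by rewrite nth0 /fa take0. Qed.

Lemma fa_last : (fa alpha t.-1 + last 0 alpha)%N = sumn alpha.
Proof.
rewrite -nth_last -fa_succ; last by lia.
by rewrite prednK ?/fa ?take_size //; lia.
Qed.

Definition sh (i : nat) : nat := (fa alpha i).-1.

Lemma sh_bounds i : (i < t.-1)%N -> (1 <= sh i.+1)%N /\ ((sh i.+1).+1 < fn alpha)%N.
Proof.
move=> it; rewrite /sh /fn.
have h1 := @fa_mono alpha 1 i.+1 isT.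
have h2 : (fa alpha i.+1 <= fa alpha t.-1)%N by apply: fa_mono; lia.
have := fa_last; rewrite fa1 in h1; lia.
Qed.

Lemma sh_inj i j : (i < t.-1)%N -> (j < t.-1)%N -> sh i.+1 = sh j.+1 -> i = j.
Proof.
move=> it jt; rewrite /sh => E; apply/eqP; rewrite eqn_leq; apply/andP; split;
  rewrite leqNgt; apply/negP => lt.
  have := @fa_strict j.+1 i.+1 lt ltac:(lia); have := @fa_strict 0 j.+1 isT ltac:(lia); lia.
have := @fa_strict i.+1 j.+1 lt ltac:(lia); have := @fa_strict 0 i.+1 isT ltac:(lia); lia.
Qed.

Lemma sh_turn i : (i < t.-1)%N ->
  let s := sh i.+1 in
  (covn alpha s.-1 s && covn alpha s.+1 s) || (covn alpha s s.-1 && covn alpha s s.+1).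
Proof.
move=> it /=; have [sb1 sb2] := @sh_bounds i it; set s := sh i.+1 in sb1 sb2 *.
have A := @fa_lt_succ i ltac:(lia).
have B := @fa_lt_succ i.+1 ltac:(lia).
have ki : (i < t)%N by lia.
have ki1 : (i.+1 < t)%N by lia.
have s1 : s.-1.+1 = s by lia.
have e1 : (fa alpha (Ordinal ki) <= s.-1.+1)%N by rewrite s1 /s /sh /=; lia.
have e2 : (s.-1.+1 < fa alpha (Ordinal ki).+1)%N by rewrite s1 /s /sh /=; lia.
have e3 : (fa alpha (Ordinal ki1) <= s.+1)%N by rewrite /s /sh /=; lia.
have e4 : (s.+1 < fa alpha (Ordinal ki1).+1)%N by rewrite /s /sh /=; lia.
case: (boolP (odd i)) => oi; apply/orP; [right|left]; apply/andP; split.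
- apply/orP; right; apply/existsP; exists (Ordinal ki); rewrite e1 e2 /= s1 eqxx //.
- apply/orP; left; apply/existsP; exists (Ordinal ki1); rewrite e3 e4 /= eqxx /= oi //.
- apply/orP; left; apply/existsP; exists (Ordinal ki); rewrite e1 e2 /= s1 eqxx //.
- apply/orP; right; apply/existsP; exists (Ordinal ki1); rewrite e3 e4 /= eqxx /= oi //.
Qed.

End Shared.

Section Main.
Variable R : realType.
Variable alpha : seq nat.
Hypothesis Ht : (2 <= size alpha)%N.
Hypothesis Hpos : all (fun k => 0 < k)%N alpha.
Hypothesis Hfirst : (2 <= head 0 alpha)%N.
Hypothesis Hlast : (2 <= last 0 alpha)%N.
Local Notation t := (size alpha).
Local Notation T := 'I_(fn alpha).
Local Notation cov := (cov alpha).
Local Notation fle := (fle alpha).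
Local Notation togS := (@togS R alpha).

Definition chiS (I : {set T}) k : R := if [exists q in I, val q == k] then 1 else 0.

Lemma chiS_add (I : {set T}) (p : T) (k : nat) : p \notin I -> chiS (p |: I) k = chiS I k + (val p == k)%:R.
Proof.
move=> pI; rewrite /chiS; case: (eqVneq (val p) k) => [E|E].
  have H1 : [exists q in p |: I, val q == k].
    by apply/exists_inP; exists p; rewrite ?setU11 ?E ?eqxx.
  rewrite H1.
  suff -> : [exists q in I, val q == k] = false by rewrite add0r.
  apply/negbTE/negP => /exists_inP[q qI /eqP qk].
  have qp : q = p by apply: val_inj; rewrite qk E.
  by move: pI; rewrite -qp qI.
have -> : [exists q in p |: I, val q == k] = [exists q in I, val q == k].
  apply/exists_inP/exists_inP => -[q qA qk]; exists q => //; last exact: setU1r.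
  move: qA; rewrite in_setU1 => /orP[/eqP qp|//].
  by move: qk E; rewrite qp => ->.
by rewrite addr0.
Qed.

Definition FS (b : 'I_t.-1 -> R) (I : {set T}) : R :=
  \sum_(i < t.-1) b i * chiS I (sh alpha i.+1).

Lemma FS_add b (I : {set T}) (p : T) : p \notin I ->
  FS b (p |: I) = FS b I + \sum_(i < t.-1) b i * (val p == sh alpha i.+1)%:R.
Proof.
move=> pI; rewrite /FS -big_split /=; apply: eq_bigr => i _.
by rewrite chiS_add // mulrDr.
Qed.
Arguments FS_add b {I p}.

Lemma sum_indic (h : T -> R) (x : T) :
  \sum_(q : T) h q * (val q == val x)%:R = h x.
Proof.
rewrite (bigD1 x) //= eqxx mulr1 big1 ?addr0 // => q qx.
by rewrite val_eqE (negbTE qx) mulr0.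
Qed.

Lemma adj_val (x y : T) : cov x y || cov y x ->
  nat_of_ord y = (nat_of_ord x).+1 \/ nat_of_ord x = (nat_of_ord y).+1.
Proof.
by case/orP => c; have [E|E] := covn_adj c; [left|right|right|left].
Qed.
Arguments adj_val {x y}.

Definition Dn (p : T) : {set T} := [set x | fle x p && (x != p)].

Lemma Dn_ideal p : is_ideal alpha (Dn p).
Proof.
apply/idealP => x y c; rewrite !inE => /andP[f yp].
apply/andP; split; first exact: (connect_trans (connect1 c) f).
apply/eqP => E; subst x; exact: no_back c f.
Qed.

Lemma Dn_add p : addable alpha (Dn p) p.
Proof.
rewrite /addable inE eqxx andbF /=; apply/forallP => r; apply/implyP => c.
by rewrite inE /fle connect1 //= cov_neq.
Qed.


Lemma indep (b : 'I_t.-1 -> R) :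
  (forall I, is_ideal alpha I -> FS b I = 0) -> forall i, b i = 0.
Proof.
move=> H i.
have [s1 s2] := @sh_bounds alpha Ht Hpos Hfirst Hlast i (ltn_ord i).
have sn : (sh alpha i.+1 < fn alpha)%N by lia.
pose s := Ordinal sn.
have sD : s \notin Dn s by case/andP: (Dn_add s).
have := FS_add b sD.
rewrite (H _ (Dn_ideal s)) (H _ (ideal_add (Dn_ideal s) (Dn_add s))) add0r.
move/esym; rewrite (bigD1 i) //= eqxx mulr1 big1 ?addr0 // => j ji.
suff -> : (sh alpha i.+1 == sh alpha j.+1) = false by rewrite mulr0.
apply/negP => /eqP E; move/negP: ji; apply; apply/eqP; apply: ord_inj.
exact: (@sh_inj alpha Ht Hpos Hfirst Hlast j i (ltn_ord j) (ltn_ord i) (esym E)).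
Qed.

Section Tg.
Variable b : 'I_t.-1 -> R.
Variable c : R.
Variable cq : T -> R.
Hypothesis HT : forall I, is_ideal alpha I -> FS b I = c + \sum_(q : T) cq q * togS I q.

Lemma diff_add I p : is_ideal alpha I -> addable alpha I p ->
  FS b (p |: I) - FS b I = \sum_(q : T) cq q * (togS (p |: I) q - togS I q).
Proof.
move=> HI Ha; rewrite (HT _ (ideal_add HI Ha)) (HT _ HI).
have -> : forall a x y : R, (a + x) - (a + y) = x - y by move=> *; ring.
by rewrite -sumrB; apply: eq_bigr => q _; rewrite mulrBr.
Qed.

Lemma step_ns p : (forall i : 'I_t.-1, nat_of_ord p != sh alpha i.+1) ->
  2 * `|cq p| <= \sum_(q : T) `|cq q| * (((nat_of_ord q).+1 == nat_of_ord p)%:R + (nat_of_ord q == (nat_of_ord p).+1)%:R).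
Proof.
move=> Hns; set I := Dn p; have HI := Dn_ideal p; have Ha := Dn_add p.
have pI : p \notin I by case/andP: Ha.
have E0 : FS b (p |: I) - FS b I = 0.
  rewrite (FS_add b pI) addrAC subrr add0r big1 // => i _.
  by rewrite (negbTE (Hns i)) mulr0.
rewrite diff_add // (bigD1 p) //= (G2 HI Ha) (G1 Ha) in E0.
set S := \sum_(q | q != p) _ in E0.
have E1 : 2 * cq p = S by move: E0; lra.
have -> : 2 * `|cq p| = `|S| by rewrite -E1 normrM ger0_norm.
rewrite (bigD1 p) //=; apply: ler_wpDl; first by rewrite mulr_ge0 ?addr_ge0 ?ler0n.
apply: (le_trans (ler_norm_sum _ _ _)); apply: ler_sum => q qp.
rewrite normrM; case: (boolP (cov p q || cov q p)) => adj.
  have GG := G6 (R:=R) HI Ha qp adj; case/andP: GG => D0 D1.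
  apply: (le_trans (ler_wpM2l (normr_ge0 _) (y := 1) _)); first by rewrite ger0_norm.
  rewrite mulr1 ler_peMr //.
  have [E|E] := adj_val adj.
    have -> : (nat_of_ord q == (nat_of_ord p).+1) = true by apply/eqP; exact: E.
    by apply: ler_wpDl; rewrite ?ler0n.
  have -> : ((nat_of_ord q).+1 == nat_of_ord p) = true by apply/eqP; rewrite E.
  by apply: ler_wpDr; rewrite ?ler0n.
rewrite negb_or in adj; case/andP: adj => a1 a2.
rewrite (G3 qp a1 a2) subrr normr0 mulr0.
by rewrite mulr_ge0 ?addr_ge0 ?ler0n.
Qed.

Lemma cov_asym (x y : T) : cov x y -> ~~ cov y x.
Proof. by move=> cv; apply/negP => cv'; apply: (no_back cv); exact: connect1. Qed.
Arguments cov_asym {x y}.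

Lemma step_sh (i : 'I_t.-1) (s : T) : nat_of_ord s = sh alpha i.+1 -> cq s = 0.
Proof.
move=> Es.
have [s1 s2] := @sh_bounds alpha Ht Hpos Hfirst Hlast i (ltn_ord i).
have /= turn := @sh_turn alpha Ht Hpos Hfirst Hlast i (ltn_ord i).
rewrite -Es in s1 s2 turn.
have hm : ((nat_of_ord s).-1 < fn alpha)%N by lia.
have hp : ((nat_of_ord s).+1 < fn alpha)%N by lia.
pose pm : T := Ordinal hm. pose pp : T := Ordinal hp.
have sS : (nat_of_ord s).-1.+1 = nat_of_ord s by lia.
have cases : (cov pm s /\ cov pp s) \/ (cov s pm /\ cov s pp).
  by case/orP: turn => /andP[h1 h2]; [left|right]; exact: (conj h1 h2).
have near_s : forall r, cov r s || cov s r -> r = pm \/ r = pp.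
  move=> r /adj_val[] E; [left|right]; apply: ord_inj => /=; clear -E s1; lia.
have nc : ~~ ((cov pm s && cov s pm) || (cov pp s && cov s pp)).
  apply/negP => /orP[] /andP[h1 h2].
    by move/negP: (cov_asym h1).
  by move/negP: (cov_asym h1).
pose I : {set T} := [set x | ~~ fle pm x && ~~ fle pp x].
have HI : is_ideal alpha I.
  apply/idealP => x y cv; rewrite !inE => /andP[h1 h2]; apply/andP; split;
    apply/negP => f; [move/negP: h1|move/negP: h2]; apply;
    exact: (connect_trans f (connect1 cv)).
have HaM : addable alpha I pm.
  apply/andP; split; first by rewrite inE /Defs.fle connect0.
  apply/forallP => r; apply/implyP => cv; rewrite inE; apply/andP; split.
    by apply/negP => f; exact: no_back cv f.
  apply/negP => f; have [E|E] := adj_val (x:=r) (y:=pm) (introT orP (or_introl cv)).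
    have r1 : (nat_of_ord r <= nat_of_ord s)%N by clear -E s1; clear -E s1; move: E => /=; lia.
    have h1 : cov pp s := cross_l (x:=pp) (y:=r) (m:=nat_of_ord s) f r1 (ltnSn _).
    have r2 : (nat_of_ord r <= (nat_of_ord s).-1)%N by clear -E s1; clear -E s1; move: E => /=; lia.
    have r3 : ((nat_of_ord s).-1 < (nat_of_ord s).+1)%N by rewrite ltnS leq_pred.
    have h2 := cross_l (x:=pp) (y:=r) (m:=(nat_of_ord s).-1) f r2 r3.
    rewrite sS in h2; have h2' : cov s pm by exact: h2.
    case: cases => [[a1 a2]|[a1 a2]]; move/negP: nc; apply.
      by rewrite a1 h2'.
    by rewrite h1 a2 orbT.
  have rs : r = s by apply: ord_inj; clear -E s1; move: E => /=; lia.
  subst r; case: cases => [[a1 a2]|[a1 a2]].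
    by move/negP: nc; apply; rewrite a1 cv.
  exact: no_back a2 f.
have HaP : addable alpha I pp.
  apply/andP; split; first by rewrite inE /Defs.fle connect0 andbF.
  apply/forallP => r; apply/implyP => cv; rewrite inE; apply/andP; split; last first.
    by apply/negP => f; exact: no_back cv f.
  apply/negP => f; have [E|E] := adj_val (x:=r) (y:=pp) (introT orP (or_introl cv)).
    have rs : r = s by apply: ord_inj; clear -E s1; move: E => /=; lia.
    subst r; case: cases => [[a1 a2]|[a1 a2]].
      by move/negP: nc; apply; rewrite a2 cv orbT.
    exact: no_back a1 f.
  have r1 : (nat_of_ord s < nat_of_ord r)%N by clear -E s1; clear -E s1; move: E => /=; lia.
  have r0 : ((nat_of_ord s).-1 <= nat_of_ord s)%N by rewrite leq_pred.
  have h1 : covn alpha (nat_of_ord s) (nat_of_ord s).+1 := cross_r (x:=pm) (y:=r) (m:=nat_of_ord s) f r0 r1.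
  have h1' : cov s pp by exact: h1.
  have r2 : ((nat_of_ord s).-1 < nat_of_ord r)%N by clear -E s1; clear -E s1; move: E => /=; lia.
  have h2 := cross_r (x:=pm) (y:=r) (m:=(nat_of_ord s).-1) f (leqnn _) r2.
  rewrite sS in h2; have h2' : cov pm s by exact: h2.
  case: cases => [[a1 a2]|[a1 a2]]; move/negP: nc; apply.
    by rewrite a2 h1' orbT.
  by rewrite h2' a1.
have pmpp : pm != pp.
  apply/eqP => /(congr1 (@nat_of_ord _)) /=; clear -s1; lia.
have pmI : pm \notin I by case/andP: HaM.
have ppI : pp \notin I by case/andP: HaP.
pose J1 := pm |: I. pose J2 := pp |: I. pose J3 := pp |: J1.
have HJ1 : is_ideal alpha J1 := ideal_add HI HaM.
have HJ2 : is_ideal alpha J2 := ideal_add HI HaP.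
have ppJ1 : pp \notin J1 by rewrite in_setU1 negb_or eq_sym pmpp.
have pmJ2 : pm \notin J2 by rewrite in_setU1 negb_or pmpp.
have HaP1 : addable alpha J1 pp.
  apply/andP; split => //; apply/forallP => r; apply/implyP => cv.
  by apply: setU1r; case/andP: HaP => _ /forallP/(_ r)/implyP; apply.
have HaM2 : addable alpha J2 pm.
  apply/andP; split => //; apply/forallP => r; apply/implyP => cv.
  by apply: setU1r; case/andP: HaM => _ /forallP/(_ r)/implyP; apply.
have HJ3 : is_ideal alpha J3 := ideal_add HJ1 HaP1.
have J3E : J3 = pm |: J2 by rewrite /J3 /J1 /J2 setUCA.
have EF : FS b I - FS b J1 - FS b J2 + FS b J3 = 0.
  rewrite /J3 (FS_add b ppJ1) /J1 (FS_add b pmI) /J2 (FS_add b ppI); ring.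
rewrite (HT _ HI) (HT _ HJ1) (HT _ HJ2) (HT _ HJ3) in EF.
have EF2 : \sum_(q : T) cq q * (togS I q - togS J1 q - togS J2 q + togS J3 q) = 0.
  transitivity (\sum_(q : T) cq q * togS I q - \sum_(q : T) cq q * togS J1 q
     - \sum_(q : T) cq q * togS J2 q + \sum_(q : T) cq q * togS J3 q).
    2: by rewrite -[X in _ = X]EF; ring.
  rewrite -!sumrB -big_split /=; apply: eq_bigr => q _; ring.
rewrite (bigD1 s) //= big1 ?addr0 in EF2; last first.
  move=> q qs.
  have dP : ~~ ((q != pp) && ~~ cov pp q && ~~ cov q pp) ->
      (nat_of_ord s <= nat_of_ord q <= (nat_of_ord s).+2)%N.
    rewrite !negb_and !negbK -orbA => /orP[/eqP->|/adj_val[]] /=; clear -s1; lia.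
  have dM : ~~ ((q != pm) && ~~ cov pm q && ~~ cov q pm) ->
      (nat_of_ord q <= nat_of_ord s <= (nat_of_ord q).+2)%N.
    rewrite !negb_and !negbK -orbA => /orP[/eqP->|/adj_val[]] /=; clear -s1; lia.
  case: (boolP ((q != pp) && ~~ cov pp q && ~~ cov q pp)) => hP.
    case/andP: hP => /andP[a0 a1] a2.
    rewrite (G3 (I:=I) a0 a1 a2) /J3 (G3 (I:=J1) a0 a1 a2); ring.
  case: (boolP ((q != pm) && ~~ cov pm q && ~~ cov q pm)) => hM.
    case/andP: hM => /andP[a0 a1] a2.
    rewrite (G3 (I:=I) a0 a1 a2) J3E (G3 (I:=J2) a0 a1 a2); ring.
  have h1 := dP hP; have h2 := dM hM.
  have qs' : q = s by apply: ord_inj; clear -h1 h2; lia.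
  by rewrite qs' eqxx in qs.
have spp : s != pp by apply/eqP => /(congr1 (@nat_of_ord _)) /=; clear; lia.
have spm : s != pm by apply/eqP => /(congr1 (@nat_of_ord _)) /=; clear -s1; lia.
case: cases => [[a1 a2]|[a1 a2]].
  rewrite (G4 HI HaM a1) (G4 HJ1 HaP1 a2) (G4 HJ2 HaM2 a1) in EF2.
  have HaS : addable alpha J3 s.
    apply/andP; split.
      rewrite /J3 /J1 !in_setU1 (negbTE spp) (negbTE spm) /= inE.
      by rewrite /Defs.fle (connect1 a1).
    apply/forallP => r; apply/implyP => cv.
    have [->|->] := near_s r (introT orP (or_introl cv)).
      by rewrite /J3 /J1 !in_setU1 eqxx orbT.
    by rewrite /J3 setU11.
  rewrite (G1 HaS) in EF2.
  by move: EF2; rewrite !subr0 add0r mulr1.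
have sI : s \in I by case/andP: HaM => _ /forallP/(_ s)/implyP; apply.
have TI : togS I s = -1.
  rewrite /togS /addable sI /= /removable sI /=.
  suff -> : [forall r, cov s r ==> (r \notin I)] by [].
  apply/forallP => r; apply/implyP => cv.
  by have [->|->] := near_s r (introT orP (or_intror cv)).
rewrite TI (G5 HaM a1) (G5 HaP a2) (G5 HaP1 a2) in EF2.
by move: EF2; rewrite !subr0 addr0 mulrN1 => /eqP; rewrite oppr_eq0 => /eqP.
Qed.
Definition Gs (k : nat) : R := \sum_(q : T) `|cq q| * (nat_of_ord q == k)%:R.

Definition prevG k := if k is j.+1 then Gs j else 0.

Lemma all_zero : forall x, cq x = 0.
Proof.
move=> x.
case: (arg_maxP (fun i => `|cq i|) (isT : predT x)) => m _ Hm.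
set M := `|cq m| in Hm.
have GvE : forall y : T, Gs (nat_of_ord y) = `|cq y|.
  by move=> y; rewrite /Gs (sum_indic (fun q => `|cq q|) y).
have Gge : forall k, 0 <= Gs k.
  by move=> k; apply: sumr_ge0 => q _; rewrite mulr_ge0 ?ler0n.
have Gle : forall k, Gs k <= M.
  move=> k; case: (ltnP k (fn alpha)) => hk.
    by rewrite -[k]/(nat_of_ord (Ordinal hk)) GvE; apply: Hm.
  rewrite /Gs big1 ?normr_ge0 // => q _.
  have : nat_of_ord q != k by apply/eqP => E; move: (ltn_ord q); rewrite E ltnNge hk.
  by move/negbTE => ->; rewrite mulr0.
have Gsplit : forall k, \sum_(q : T) `|cq q| * (((nat_of_ord q).+1 == k)%:R + (nat_of_ord q == k.+1)%:R)
    = prevG k + Gs k.+1.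
  case=> [|j].
    by rewrite /prevG add0r /Gs; apply: eq_bigr => q _; rewrite /= add0r.
  by rewrite /prevG /Gs -big_split; apply: eq_bigr => q _; rewrite eqSS mulrDr.
have M0 : 0 <= M by exact: normr_ge0.
case: (eqVneq M 0) => [M0'|Mn0].
  apply/normr0_eq0/eqP; rewrite eq_le normr_ge0 andbT -M0'; exact: Hm.
have Mpos : 0 < M by rewrite lt0r Mn0.
have step : forall k, prevG k < M -> Gs k < M.
  move=> k Hprev; case: (ltnP k (fn alpha)) => hk; last first.
    rewrite /Gs big1 // => q _.
    have : nat_of_ord q != k by apply/eqP => E; move: (ltn_ord q); rewrite E ltnNge hk.
    by move/negbTE => ->; rewrite mulr0.
  pose y := Ordinal hk.
  have Gk : Gs k = `|cq y| := GvE y.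
  rewrite Gk.
  case: (pickP (fun i : 'I_t.-1 => nat_of_ord y == sh alpha i.+1)) => [i /eqP E|H].
    by rewrite (step_sh i y E) normr0.
  have ns : forall i : 'I_t.-1, nat_of_ord y != sh alpha i.+1.
    by move=> i; apply/negbT; exact: H i.
  have h3 : 2 * `|cq y| <= prevG k + Gs k.+1.
    by rewrite -Gsplit; exact: step_ns ns.
  have h2 := Gle k.+1.
  move: Hprev h2 h3; lra.
have claim : forall k, Gs k < M by elim=> [|j IH]; apply: step.
by have := claim (nat_of_ord m); rewrite GvE ltxx.
Qed.

End Tg.

End Main.

Theorem lemma4p3 (R : realType) (alpha : seq nat)
  (Ht : (2 <= size alpha)%N)
  (Hpos : all (fun k => 0 < k)%N alpha)
  (Hfirst : (2 <= head 0 alpha)%N)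
  (Hlast : (2 <= last 0 alpha)%N) :
  (forall b : 'I_(size alpha).-1 -> R,
     (forall I : JF alpha,
        \sum_(i < (size alpha).-1) b i * chi_shared R alpha i.+1 I = 0) ->
     forall i, b i = 0)
  /\
  (forall f : JF alpha -> R,
     (exists b : 'I_(size alpha).-1 -> R,
        forall I, f I = \sum_(i < (size alpha).-1) b i * chi_shared R alpha i.+1 I) ->
     in_IT R alpha f ->
     forall I, f I = 0).
Proof.
split.
  move=> b Hb; apply: (@indep R alpha Ht Hpos Hfirst Hlast b) => I HI.
  exact: (Hb (exist _ I HI)).
move=> f [b Hf] [_ [c [cq Hc]]] I.
have HT : forall J, is_ideal alpha J ->
    FS R alpha b J = c + \sum_(q : 'I_(fn alpha)) cq q * togS R alpha J q.
  move=> J HJ; have := Hc (exist _ J HJ); rewrite Hf => E.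
  rewrite /FS E; congr (_ + _); apply: eq_bigr => q _; by rewrite togTE.
have Z := @all_zero R alpha Ht Hpos Hfirst Hlast b c cq HT.
have H0 : is_ideal alpha set0 by apply/idealP => x y _; rewrite in_set0.
have C0 : c = 0.
  have := HT _ H0; rewrite big1 ?addr0; last by move=> q _; rewrite Z mul0r.
  move=> <-; rewrite /FS big1 // => i _.
  rewrite /chiS; case: exists_inP => [[q]|]; first by rewrite in_set0.
  by rewrite mulr0.
rewrite Hc C0 add0r big1 // => q _; by rewrite Z mul0r.
Qed.
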